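(* For every integer $L \ge 2$ and every integer $D \ge 1$ there exists a position-free decoder $\widetilde{\mathcal D}$ with $L$ Transformer blocks and embedding dimension $D$ with the following property: for every encoder $\mathcal E$ (with positional embeddings) there exists a finite input sequence $(x_1, x_2, \dots, x_n)$ with $x_1, \dots, x_n \in \mathbb R^D$ such that $\mathcal T_{\widetilde{\mathcal D}}(x_1, \dots, x_n) \neq \mathcal T_{\mathcal E}(x_1, \dots, x_n)$.
   Context: Transformer model: a Transformer with $L$ blocks and embedding dimension $D$ maps a sequence $(h_1,\dots,h_n)$ of vectors in $\mathbb R^D$ to a sequence of the same length. Each block consists of a single-head attention sublayer followed by a residual (skip) connection, then a token-wise MLP sublayer followed by a residual connection; there is no layer normalization and no $1/\sqrt D$ scaling of attention scores. The attention sublayer of block $\ell$ has matrices $\mathbf W_Q^\ell, \mathbf W_K^\ell, \mathbf W_V^\ell \in \mathbb R^{D\times D}$; with $q_i = \mathbf W_Q^\ell h_i$, $k_j = \mathbf W_K^\ell h_j$, $v_j = \mathbf W_V^\ell h_j$, its output at position $i$ is $\sum_{j \in S_i} \frac{\exp(q_i^\top k_j)}{\sum_{j' \in S_i}\exp(q_i^\top k_{j'})} v_j$, where $S_i = \{1,\dots,n\}$ for an encoder (full attention) and $S_i = \{1,\dots,i\}$ for a decoder (causal mask). A position-free encoder/decoder $\widetilde{\mathcal E}$, $\widetilde{\mathcal D}$ is applied directly to the input vectors; an encoder $\mathcal E$ (resp. decoder $\mathcal D$) with positional embeddings $p_1, p_2, \dots \in \mathbb R^D$ is defined by $\mathcal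 E(x_1,\dots,x_n) = \widetilde{\mathcal E}(x_1+p_1,\dots,x_n+p_n)$ (similarly for $\mathcal D$). Writing $\mathcal M(x_1,\dots,x_n)_i$ for the $i$-th output vector, the causal model of a Transformer $\mathcal M$ is $\mathcal T_{\mathcal M}(x_1,\dots,x_n) = (\mathcal M(x_1)_1, \mathcal M(x_1,x_2)_2, \dots, \mathcal M(x_1,\dots,x_n)_n)$. *)

(* Defs.v *)
From HB Require Import structures.
From mathcomp Require Import all_boot all_order all_algebra.
From mathcomp Require Import reals sequences.
Set Implicit Arguments. Unset Strict Implicit. Unset Printing Implicit Defensive.
Import Order.TTheory GRing.Theory Num.Theory.
Local Open Scope ring_scope.

Section Transformer.
Variables (R : realType) (D : nat).

Record block := Block {
  WQ : 'M[R]_D; WK : 'M[R]_D; WV : 'M[R]_D;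
  hid : nat;
  W1 : 'M[R]_(hid, D); b1 : 'cV[R]_hid;
  W2 : 'M[R]_(D, hid); b2 : 'cV[R]_D }.

Definition relu (x : R) : R := Num.max 0 x.

Definition mlp (B : block) (h : 'cV[R]_D) : 'cV[R]_D :=
  W2 B *m map_mx relu (W1 B *m h + b1 B) + b2 B.

(* attention score q_i^T k_j  (no 1/sqrt D scaling) *)
Definition score (B : block) (hi hj : 'cV[R]_D) : R :=
  ((WQ B *m hi)^T *m (WK B *m hj)) 0 0.

(* attention sublayer output at position i (0-based); causal = decoder mask:
   S_i = {0..i} if causal, all positions otherwise *)
Definition attn_at (causal : bool) (B : block) (hs : seq 'cV[R]_D) (i : nat)
  : 'cV[R]_D :=
  let hi := nth 0 hs i in
  let S := if causal then take i.+1 hs else hs in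
  let Z := \sum_(hj <- S) expR (score B hi hj) in
  \sum_(hj <- S) ((expR (score B hi hj) / Z) *: (WV B *m hj)).

Definition attention (causal : bool) (B : block) (hs : seq 'cV[R]_D)
  : seq 'cV[R]_D :=
  [seq attn_at causal B hs i | i <- iota 0 (size hs)].

Definition block_apply (causal : bool) (B : block) (hs : seq 'cV[R]_D)
  : seq 'cV[R]_D :=
  let hs' := [seq h.1 + h.2 | h <- zip hs (attention causal B hs)] in
  [seq h + mlp B h | h <- hs'].

Definition transformer (causal : bool) (Bs : seq block) (hs : seq 'cV[R]_D)
  : seq 'cV[R]_D :=
  foldl (fun acc B => block_apply causal B acc) hs Bs.

Definition pf_decoder (Bs : seq block) := transformer true Bs.
Definition pf_encoder (Bs : seq block) := transformer false Bs.

(* encoder with positional embeddings p_1, p_2, ... (p (i-1) = p_i) *)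
Definition encoder (Bs : seq block) (p : nat -> 'cV[R]_D) (xs : seq 'cV[R]_D)
  : seq 'cV[R]_D :=
  pf_encoder Bs [seq xs`_i + p i | i <- iota 0 (size xs)].

Definition causal_model (M : seq 'cV[R]_D -> seq 'cV[R]_D) (xs : seq 'cV[R]_D)
  : seq 'cV[R]_D :=
  [seq nth 0 (M (take i.+1 xs)) i | i <- iota 0 (size xs)].

End Transformer.

(* Main.v *)
Require Import Defs.
From HB Require Import structures.
From mathcomp Require Import all_boot all_order all_algebra.
From mathcomp Require Import reals sequences.
From mathcomp Require Import exp lra.
Set Implicit Arguments. Unset Strict Implicit. Unset Printing Implicit Defensive.
Import Order.TTheory GRing.Theory Num.Theory.
Local Open Scope ring_scope.

Section Aux.
Variables (R : realType) (D : nat).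

Definition swap T (s : seq T) := if s is x :: y :: r then y :: x :: r else s.

Lemma swap_map T U (f : T -> U) s : swap (map f s) = map f (swap s).
Proof. by case: s => [|x [|y r]]. Qed.

Lemma big_swap (F : 'cV[R]_D -> 'cV[R]_D) s :
  \sum_(x <- swap s) F x = \sum_(x <- s) F x.
Proof. by case: s => [|x [|y r]] //=; rewrite !big_cons addrCA. Qed.

Lemma big_swapR (F : 'cV[R]_D -> R) s :
  \sum_(x <- swap s) F x = \sum_(x <- s) F x.
Proof. by case: s => [|x [|y r]] //=; rewrite !big_cons addrCA. Qed.

Definition G (B : block R D) (hs : seq 'cV[R]_D) (hi : 'cV[R]_D) :=
  let Z := \sum_(hj <- hs) expR (score B hi hj) in
  \sum_(hj <- hs) ((expR (score B hi hj) / Z) *: (WV B *m hj)).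

Lemma G_swap (B : block R D) hs h : G B (swap hs) h = G B hs h.
Proof.
rewrite /G /= big_swapR big_swap //.
Qed.

Lemma attention_false (B : block R D) hs : attention false B hs = map (G B hs) hs.
Proof.
rewrite /attention.
transitivity (map (G B hs) (map (nth 0 hs) (iota 0 (size hs)))).
  by rewrite -map_comp.
by rewrite -/(mkseq _ _) mkseq_nth.
Qed.

Lemma block_false (B : block R D) (hs : seq 'cV[R]_D) : block_apply false B hs =
  map (fun h => (h + G B hs h) + mlp B (h + G B hs h)) hs.
Proof.
rewrite /block_apply attention_false.
rewrite -{1}(map_id hs) zip_map -!map_comp //.
Qed.

Lemma block_swap (B : block R D) (hs : seq 'cV[R]_D) :
  block_apply false B (swap hs) = swap (block_apply false B hs).
Proof. by rewrite !block_false swap_map; apply: eq_map => h; rewrite G_swap. Qed.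

Lemma enc_swap (Bs : seq (block R D)) (hs : seq 'cV[R]_D) :
  pf_encoder Bs (swap hs) = swap (pf_encoder Bs hs).
Proof.
rewrite /pf_encoder /transformer.
by elim: Bs hs => //= B Bs IH hs; rewrite block_swap IH.
Qed.

Lemma nth_swap2 T (x0 : T) s i : nth x0 (swap s) i.+2 = nth x0 s i.+2.
Proof. by case: s => [|x [|y r]]. Qed.

Definition blk (w : R) : block R D :=
  @Block R D 0 0 (w%:M) 0 (0 : 'M_(0, D)) 0 0 0.

Lemma mlp_blk w h : mlp (blk w) h = 0.
Proof. by rewrite /mlp /= mul0mx addr0. Qed.

Lemma score_blk w x y : score (blk w) x y = 0.
Proof. by rewrite /score /= !mul0mx trmx0 mul0mx mxE. Qed.

Lemma attn_blk w hs i : attn_at true (blk w) hs i =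
  (size (take i.+1 hs))%:R^-1 *: \sum_(hj <- take i.+1 hs) (w *: hj).
Proof.
rewrite /attn_at /=.
have HZ : \sum_(hj0 <- take i.+1 hs) expR (score (blk w) hs`_i hj0) =
   (size (take i.+1 hs))%:R.
  under eq_bigr => hj _ do rewrite (score_blk w hs`_i hj) expR0.
  rewrite big_const_seq count_predT.
  by elim: (size _) => //= n IH; rewrite IH mulrS.
rewrite HZ scaler_sumr; apply: eq_bigr => hj _.
by rewrite (score_blk w hs`_i hj) expR0 div1r mul_scalar_mx.
Qed.

Lemma zip0 (f : nat -> 'cV[R]_D) (Hf : forall i, f i = 0) hs k :
  [seq h.1 + h.2 | h <- zip hs [seq f i | i <- iota k (size hs)]] = hs.
Proof. by elim: hs k => //= h hs IH k; rewrite Hf addr0 IH. Qed.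

Lemma block_blk0 hs : block_apply true (blk 0) hs = hs.
Proof.
rewrite /block_apply /attention zip0; last first.
  by move=> i; rewrite attn_blk big1 ?scaler0 // => hj _; rewrite scale0r.
by rewrite -[RHS]map_id; apply: eq_map => h; rewrite mlp_blk addr0.
Qed.

Lemma dec_red k hs : pf_decoder (blk 1 :: blk 1 :: nseq k (blk 0)) hs =
  block_apply true (blk 1) (block_apply true (blk 1) hs).
Proof.
rewrite /pf_decoder /transformer /=.
by elim: k (block_apply _ _ _) => //= k IH h; rewrite block_blk0.
Qed.

Lemma blk1_3 a b c : block_apply true (blk 1) [:: a; b; c] =
  [:: a + a; b + 2^-1 *: (a + b); c + 3^-1 *: (a + b + c)].
Proof.
rewrite /block_apply /attention /= !attn_blk /= !big_cons !big_nil !mlp_blk.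
by rewrite !scale1r !addr0 !addrA invr1 scale1r.
Qed.

End Aux.

Lemma cm_nth2 (R : realType) (D : nat) (M : seq 'cV[R]_D -> seq 'cV[R]_D) a b c :
  nth 0 (causal_model M [:: a; b; c]) 2 = nth 0 (M [:: a; b; c]) 2.
Proof. by []. Qed.

Lemma enc3 (R : realType) (D : nat) (enc : seq (block R D)) p a b c :
  encoder enc p [:: a; b; c] = pf_encoder enc [:: a + p 0%N; b + p 1%N; c + p 2%N].
Proof. by []. Qed.

Theorem theorem1 (R : realType) (L D : nat) :
  (2 <= L)%N -> (1 <= D)%N ->
  exists dec : seq (block R D),
    size dec = L /\
    forall (enc : seq (block R D)) (p : nat -> 'cV[R]_D),
      exists xs : seq 'cV[R]_D,
        causal_model (pf_decoder dec) xs <> causal_model (encoder enc p) xs.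
Proof.
move=> L2; case: D => // n _.
exists (@blk R n.+1 1 :: @blk R n.+1 1 :: nseq (L - 2) (@blk R n.+1 0)); split.
  by rewrite /= size_nseq -addn2 subnK.
move=> enc p.
set u : 'cV[R]_n.+1 := const_mx 1 + p 1%N - p 0%N.
set xs1 := [:: u; 0; 0].
set xs2 := [:: p 1%N - p 0%N; u + p 0%N - p 1%N; 0].
case: (eqVneq (causal_model (pf_decoder (@blk R n.+1 1 :: @blk R n.+1 1 :: nseq (L - 2) (@blk R n.+1 0))) xs1)
   (causal_model (encoder enc p) xs1)) => [E1|NE]; last by exists xs1; apply/eqP.
case: (eqVneq (causal_model (pf_decoder (@blk R n.+1 1 :: @blk R n.+1 1 :: nseq (L - 2) (@blk R n.+1 0))) xs2)
   (causal_model (encoder enc p) xs2)) => [E2|NE]; last by exists xs2; apply/eqP.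
move/(congr1 (fun s => nth 0 s 2)): E1; rewrite /xs1 !cm_nth2 enc3 dec_red !blk1_3 /=.
move/(congr1 (fun s => nth 0 s 2)): E2; rewrite /xs2 !cm_nth2 enc3 dec_red !blk1_3 /=.
have -> : [:: p 1%N - p 0%N + p 0%N; u + p 0%N - p 1%N + p 1%N; 0 + p 2%N] =
   swap [:: u + p 0%N; 0 + p 1%N; 0 + p 2%N].
  by rewrite /= !subrK !add0r.
rewrite enc_swap (nth_swap2 _ _ 0) => E2 E1.
move: E2; rewrite -E1 => /(congr1 (fun M : 'cV[R]_n.+1 => M ord0 ord0)).
rewrite /u !mxE.
move: (p 1%N ord0 ord0) (p 0%N ord0 ord0) => x y H.
have : (0 : R) < 0 by lra.
by rewrite ltxx.
Qed.
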